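(* Let $f$ be a positive Boolean function on $B^n$ and let $S$ be a nonempty set of $k$ relevant variables of $f$. Then there exist at least $k+1$ extremal points of $f$ corresponding to $S$.
   Context: $B=\{0,1\}$; $\mathbf{x}\preceq\mathbf{y}$ means $(\mathbf{x})_i=1\Rightarrow(\mathbf{y})_i=1$ for all $i$. $f$ is positive if $f(\mathbf{x})=1$ and $\mathbf{x}\preceq\mathbf{y}$ imply $f(\mathbf{y})=1$. Maximal zeros (resp. minimal ones) are $\preceq$-maximal false points (resp. $\preceq$-minimal true points); extremal points are maximal zeros and minimal ones. A variable $x_i$ is relevant if $f_{|x_i=0}\not\equiv f_{|x_i=1}$. A maximal zero $\mathbf{y}$ corresponds to $x_i$ if $(\mathbf{y})_i=0$; a minimal one $\mathbf{y}$ corresponds to $x_i$ if $(\mathbf{y})_i=1$. An extremal point corresponds to a set $S$ of variables if it corresponds to at least one variable in $S$. *)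

(* Defs.v *)
From mathcomp Require Import all_boot.
Set Implicit Arguments. Unset Strict Implicit. Unset Printing Implicit Defensive.

Definition point (n : nat) := {ffun 'I_n -> bool}.

Definition preceq n (x y : point n) : bool := [forall i, x i ==> y i].

Definition positive n (f : point n -> bool) : Prop :=
  forall x y : point n, f x -> preceq x y -> f y.

Definition setc n (x : point n) (i : 'I_n) (b : bool) : point n :=
  [ffun j => if j == i then b else x j].

Definition restrict n (f : point n -> bool) (i : 'I_n) (b : bool) : point n -> bool :=
  fun x => f (setc x i b).

Definition relevant n (f : point n -> bool) (i : 'I_n) : Prop :=
  exists x : point n, restrict f i false x <> restrict f i true x.

Definition maximal_zero n (f : point n -> bool) (y : point n) : bool :=
  ~~ f y && [forall z : point n, (preceq y z && ~~ f z) ==> (z == y)].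
Definition minimal_one n (f : point n -> bool) (y : point n) : bool :=
  f y && [forall z : point n, (preceq z y && f z) ==> (z == y)].
Definition extremal n (f : point n -> bool) (y : point n) : bool :=
  maximal_zero f y || minimal_one f y.

Definition corresponds_var n (f : point n -> bool) (y : point n) (i : 'I_n) : bool :=
  (maximal_zero f y && ~~ y i) || (minimal_one f y && y i).
Definition corresponds_set n (f : point n -> bool) (y : point n) (S : {set 'I_n}) : bool :=
  [exists i in S, corresponds_var f y i].

(* Main.v *)
Require Import Defs.
From mathcomp Require Import all_boot.
From Stdlib Require Import Classical.
Set Implicit Arguments. Unset Strict Implicit. Unset Printing Implicit Defensive.

Section Basics.
Variable n : nat.
Implicit Types (x y z : point n) (f : point n -> bool).

Lemma preceqP x y : reflect (forall k, x k -> y k) (preceq x y).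
Proof.
apply: (iffP forallP) => H k; first by move=> xk; move: (H k); rewrite xk.
by apply/implyP; apply: H.
Qed.

Lemma preceq_refl x : preceq x x.
Proof. by apply/preceqP. Qed.

Lemma preceq_trans x y z : preceq x y -> preceq y z -> preceq x z.
Proof. by move=> /preceqP H1 /preceqP H2; apply/preceqP => k /H1 /H2. Qed.

Definition wt x := #|[set k | x k]|.

Lemma wt_le x y : preceq x y -> wt x <= wt y.
Proof.
move=> /preceqP H; apply: subset_leq_card; apply/subsetP => k.
by rewrite !inE => /H.
Qed.

Lemma wt_eq x y : preceq x y -> wt y <= wt x -> x = y.
Proof.
move=> /preceqP H Hw.
have sub : [set k | x k] \subset [set k | y k].
  by apply/subsetP => k; rewrite !inE => /H.
have /eqP E : [set k | x k] == [set k | y k] by rewrite eqEcard sub.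
apply/ffunP => k; move/setP: E => /(_ k); rewrite !inE.
by [].
Qed.

Lemma minimal_oneP f y :
  reflect (f y /\ forall z, preceq z y -> f z -> z = y) (minimal_one f y).
Proof.
rewrite /minimal_one; apply: (iffP andP) => [[fy /forallP H]|[fy H]].
  split=> // z zy fz; move/implyP: (H z); rewrite zy fz => /(_ isT) /eqP //.
split=> //; apply/forallP => z; apply/implyP => /andP [zy fz].
by rewrite (H z zy fz).
Qed.

Lemma maximal_zeroP f y :
  reflect (~~ f y /\ forall z, preceq y z -> ~~ f z -> z = y) (maximal_zero f y).
Proof.
rewrite /maximal_zero; apply: (iffP andP) => [[fy /forallP H]|[fy H]].
  split=> // z zy fz; move/implyP: (H z); rewrite zy fz => /(_ isT) /eqP //.
split=> //; apply/forallP => z; apply/implyP => /andP [zy fz].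
by rewrite (H z zy fz).
Qed.

Lemma exists_min_one f x : f x -> exists y, minimal_one f y /\ preceq y x.
Proof.
move=> fx.
pose P := [pred z | preceq z x && f z].
have Px : P x by rewrite /P inE preceq_refl fx.
case: (arg_minnP wt Px) => y /andP [yx fy] Hmin.
exists y; split=> //; apply/minimal_oneP; split=> // z zy fz.
apply: wt_eq => //; apply: Hmin; rewrite inE fz andbT.
exact: preceq_trans zy yx.
Qed.

Lemma exists_max_zero f x : ~~ f x -> exists y, maximal_zero f y /\ preceq x y.
Proof.
move=> fx.
pose P := [pred z | preceq x z && ~~ f z].
have Px : P x by rewrite /P inE preceq_refl fx.
case: (arg_maxnP wt Px) => y /andP [yx fy] Hmax.
exists y; split=> //; apply/maximal_zeroP; split=> // z zy fz.
symmetry; apply: wt_eq => //; apply: Hmax; rewrite inE fz andbT.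
exact: preceq_trans yx zy.
Qed.

End Basics.

Section Setc.
Variable n : nat.
Implicit Types (x y z : point n) (f : point n -> bool).

Lemma setcE x i b k : setc x i b k = if k == i then b else x k.
Proof. by rewrite /setc ffunE. Qed.

Lemma setc_i x i b : setc x i b i = b.
Proof. by rewrite setcE eqxx. Qed.

Lemma setc_id x i : setc x i (x i) = x.
Proof. by apply/ffunP => k; rewrite setcE; case: eqP => // ->. Qed.

Lemma setc_same x i a b : setc (setc x i a) i b = setc x i b.
Proof. by apply/ffunP => k; rewrite !setcE; case: eqP. Qed.

Lemma setc_comm x i j a b : i != j -> setc (setc x i a) j b = setc (setc x j b) i a.
Proof.
move=> ij; apply/ffunP => k; rewrite !setcE.
case: (k =P i) => [ki|]; case: (k =P j) => [kj|] //; by move: ij; rewrite -ki -kj eqxx.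
Qed.

Lemma preceq_setc x y i b : preceq x y -> preceq (setc x i b) (setc y i b).
Proof. move=> /preceqP H; apply/preceqP => k; rewrite !setcE; case: eqP => // _; exact: H. Qed.

Lemma preceq_setc0 x i : preceq (setc x i false) x.
Proof. by apply/preceqP => k; rewrite setcE; case: eqP. Qed.

Lemma preceq_setc1 x i : preceq x (setc x i true).
Proof. by apply/preceqP => k; rewrite setcE; case: eqP. Qed.

Lemma restrict_pos f i b : positive f -> positive (restrict f i b).
Proof. by move=> fp x y; rewrite /restrict => fx xy; apply: fp fx (preceq_setc _ _ xy). Qed.

Lemma restrict_setc f i b x c : restrict f i b (setc x i c) = restrict f i b x.
Proof. by rewrite /restrict setc_same. Qed.

Lemma rel_witness f i : positive f -> relevant f i ->
  exists x, f (setc x i false) = false /\ f (setc x i true) = true.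
Proof.
move=> fp [x]; rewrite /restrict => H; exists x.
case E0: (f (setc x i false)); case E1: (f (setc x i true)) => //; rewrite ?E0 ?E1 in H; try by [].
have : f (setc x i true).
  apply: fp (E0) _; apply/preceqP => k; rewrite !setcE; case: eqP => //.
by rewrite E1.
Qed.

Lemma rel_max_zero f i : positive f -> relevant f i ->
  exists z, maximal_zero f z /\ z i = false.
Proof.
move=> fp /(rel_witness fp) [x [H0 H1]].
have [z [mz xz]] := @exists_max_zero _ f (setc x i false) (negbT H0).
exists z; split=> //; apply/negP => zi.
move/maximal_zeroP: mz => [/negP fz _]; apply: fz.
apply: fp H1 _; apply/preceqP => k; rewrite setcE; case: (k =P i) => [->//|ki].
move/preceqP: xz => /(_ k); rewrite setcE; case: eqP => //.
Qed.

Lemma rel_min_one f i : positive f -> relevant f i ->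
  exists y, minimal_one f y /\ y i = true.
Proof.
move=> fp /(rel_witness fp) [x [H0 H1]].
have [y [my yx]] := @exists_min_one _ f (setc x i true) H1.
exists y; split=> //; case Ey: (y i) => //.
move/minimal_oneP: my => [fy _].
have : f (setc x i false).
  apply: fp fy _; apply/preceqP => k; rewrite setcE; case: (k =P i) => [->|ki].
    by rewrite Ey.
  move/preceqP: yx => /(_ k); rewrite setcE; case: eqP => //.
by rewrite H0.
Qed.

End Setc.

Section Phi.
Variables (n : nat) (f : point n -> bool) (i : 'I_n).
Hypothesis fp : positive f.

Lemma setc_eq (x : point n) j c : x j = c -> setc x j c = x.
Proof. by move=> <-; exact: setc_id. Qed.

Lemma min_g_i b p : minimal_one (restrict f i b) p -> p i = false.
Proof.
move/minimal_oneP => [gp H].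
have := H (setc p i false) (preceq_setc0 _ _).
rewrite restrict_setc => /(_ gp) <-; exact: setc_i.
Qed.

Lemma max_g_i b p : maximal_zero (restrict f i b) p -> p i = true.
Proof.
move/maximal_zeroP => [gp H].
have := H (setc p i true) (preceq_setc1 _ _).
rewrite restrict_setc => /(_ gp) <-; exact: setc_i.
Qed.

Definition phi b (p : point n) := if f p == restrict f i b p then p else setc p i b.

Lemma f_phi b p : f (phi b p) = restrict f i b p.
Proof. by rewrite /phi; case: eqP. Qed.

Lemma phi_coord b p k : k != i -> phi b p k = p k.
Proof. by move=> ki; rewrite /phi; case: eqP => // _; rewrite setcE (negbTE ki). Qed.

Lemma preceq_i (x y : point n) j : preceq x y -> y j = false -> x j = false.
Proof. by move/preceqP => H yj; apply/negP => /H; rewrite yj. Qed.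

Lemma preceq_i1 (x y : point n) j : preceq x y -> x j = true -> y j = true.
Proof. by move/preceqP => H /H. Qed.

Lemma phi_min b p : minimal_one (restrict f i b) p -> minimal_one f (phi b p).
Proof.
move=> mp; have pi := min_g_i mp; move/minimal_oneP: mp => [gp H].
apply/minimal_oneP; rewrite f_phi; split=> // z.
move: gp H; rewrite /phi /restrict; case: b => gp H.
- case Efp: (f p); rewrite gp /=.
    move=> zq fz; apply: H => //; apply: fp fz (preceq_setc1 _ _).
  move=> zq fz.
  have E : setc z i false = p.
    apply: H; last by rewrite setc_same; apply: fp fz (preceq_setc1 _ _).
    apply/preceqP => k; rewrite setcE; case: (k =P i) => // /eqP ki zk.
    by move/preceqP: zq => /(_ k zk); rewrite setcE (negbTE ki).
  case Ez: (z i).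
    by rewrite -E setc_same setc_eq.
  by move: fz; rewrite -(setc_eq Ez) E Efp.
- have sp : setc p i false = p by exact: setc_eq.
  rewrite sp in gp *; rewrite eqxx => zp fz.
  by apply: H => //; rewrite setc_eq //; apply: preceq_i zp pi.
Qed.

Lemma phi_max b p : maximal_zero (restrict f i b) p -> maximal_zero f (phi b p).
Proof.
move=> mp; have pi := max_g_i mp; move/maximal_zeroP: mp => [gp H].
apply/maximal_zeroP; rewrite f_phi; split=> // z.
move: gp H; rewrite /phi /restrict; case: b => gp H.
- have sp : setc p i true = p by exact: setc_eq.
  rewrite sp in gp *; rewrite eqxx => zp fz.
  by apply: H => //; rewrite setc_eq //; apply: preceq_i1 zp pi.
- case Efp: (f p); rewrite (negbTE gp) /=; last first.
    move=> zq fz; apply: H => //; apply/negP => fz'; move/negP: fz; apply.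
    apply: fp fz' (preceq_setc0 _ _).
  move=> zq fz.
  have E : setc z i true = p.
    apply: H; last first.
      rewrite setc_same; apply/negP => fz'; move/negP: fz; apply.
      apply: fp fz' (preceq_setc0 _ _).
    apply/preceqP => k pk; rewrite setcE; case: (k =P i) => // /eqP ki.
    by move/preceqP: zq => /(_ k); rewrite setcE (negbTE ki); apply.
  case Ez: (z i); last by rewrite -E setc_same setc_eq.
  by move: fz; rewrite -(setc_eq Ez) E Efp.
Qed.

End Phi.

Definition Ex n (h : point n -> bool) (T : {set 'I_n}) :=
  [set y : point n | extremal h y && corresponds_set h y T].

Lemma mo_nmz n (h : point n -> bool) y : minimal_one h y -> maximal_zero h y = false.
Proof. by move=> /andP [hy _]; rewrite /maximal_zero hy. Qed.

Lemma mz_nmo n (h : point n -> bool) y : maximal_zero h y -> minimal_one h y = false.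
Proof. by move=> /andP [hy _]; rewrite /minimal_one (negbTE hy). Qed.

Section Step.
Variables (n : nat) (f : point n -> bool) (i : 'I_n) (b : bool) (S : {set 'I_n}).
Hypothesis fp : positive f.
Hypothesis iS : i \in S.
Hypothesis reli : relevant f i.

Lemma setc_phi p c : setc (phi f i b p) i c = setc p i c.
Proof. by rewrite /phi; case: eqP => // _; rewrite setc_same. Qed.

Lemma phi_inj_ext p : extremal (restrict f i b) p ->
  p = setc (phi f i b p) i (~~ f (phi f i b p)).
Proof.
rewrite setc_phi f_phi => /orP [mp|mp].
  by have := max_g_i mp; move/andP: mp => [/negbTE -> _] /= <-; rewrite setc_id.
by have := min_g_i mp; move/andP: mp => [-> _] /= <-; rewrite setc_id.
Qed.

Lemma phi_sub : phi f i b @: Ex (restrict f i b) (S :\ i) \subset Ex f S.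
Proof.
apply/subsetP => x /imsetP [p pE ->].
move: pE; rewrite inE => /andP [ep /existsP [j /andP [jS cj]]].
rewrite inE; move: jS; rewrite !inE => /andP [ji jS].
case/orP: ep => mp.
- have mf := phi_max fp mp.
  rewrite /extremal mf /=; apply/existsP; exists j; rewrite jS /=.
  move: cj; rewrite /corresponds_var (mz_nmo mp) (mz_nmo mf) mf mp phi_coord //.
- have mf := phi_min fp mp.
  rewrite /extremal mf orbT /=; apply/existsP; exists j; rewrite jS /=.
  move: cj; rewrite /corresponds_var (mo_nmz mp) (mo_nmz mf) mf mp phi_coord //.
Qed.

Lemma phi_injS : {in Ex (restrict f i b) (S :\ i) &, injective (phi f i b)}.
Proof.
move=> p q; rewrite !inE => /andP [ep _] /andP [eq _] E.
by rewrite (phi_inj_ext ep) (phi_inj_ext eq) E.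
Qed.

Lemma extra : exists q, q \in Ex f S /\ q i = ~~ b /\ f q = ~~ b.
Proof.
case: b.
  have [z [mz zi]] := rel_max_zero fp reli.
  exists z; split; last by split=> //; move/andP: mz => [/negbTE -> _].
  rewrite inE /extremal mz /=; apply/existsP; exists i.
  by rewrite iS /corresponds_var mz zi.
have [z [mz zi]] := rel_min_one fp reli.
exists z; split; last by split=> //; move/andP: mz => [-> _].
rewrite inE /extremal mz orbT /=; apply/existsP; exists i.
by rewrite iS /corresponds_var mz zi orbT.
Qed.

Lemma step_card : #|Ex (restrict f i b) (S :\ i)| < #|Ex f S|.
Proof.
rewrite -(card_in_imset phi_injS); apply: proper_card; apply/properP.
split; first exact: phi_sub.
have [q [qE [qi fq]]] := extra; exists q => //.
apply/imsetP => [[p pE qp]].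
move: pE; rewrite inE => /andP [ep _].
have gp : restrict f i b p = ~~ b by rewrite -f_phi -qp.
have pib : p i = b.
  case/orP: ep => mp.
    by move/andP: (mp) gp => [/negbTE -> _]; case: b => // _; rewrite (max_g_i mp).
  by move/andP: (mp) gp => [-> _]; case: b => // _; rewrite (min_g_i mp).
move: qi; rewrite qp /phi; case: eqP => _; rewrite ?pib ?setc_i; by case: b.
Qed.

End Step.

Definition swp n (i j : 'I_n) (x : point n) : point n :=
  [ffun k => if k == i then x j else if k == j then x i else x k].

Ltac kcases i j l :=
  let k := fresh "k" in
  apply/ffunP => k; rewrite ?setcE ?ffunE ?setcE;
  case: (eqVneq k i) => [?|?]; case: (eqVneq k j) => [?|?];
  case: (eqVneq k l) => [?|?]; subst;
  try (match goal with H : is_true (?a != ?a) |- _ => by rewrite eqxx in H end);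
  rewrite ?eqxx //=;
  repeat match goal with H : is_true (?a != ?b) |- _ =>
     try rewrite (negbTE H); try rewrite eq_sym (negbTE H); clear H end; rewrite //=.

Section Kill.
Variables (n : nat) (f : point n -> bool).
Hypothesis fp : positive f.

Lemma final_contra (i j l : 'I_n) : i != j -> i != l -> j != l ->
  (forall y, f (setc (setc y j false) i true) = f (setc (setc y j true) i true)) ->
  (forall y, f (setc (setc y l false) i false) = f (setc (setc y l true) i false)) ->
  (forall x, f x = f (swp i j x)) ->
  (forall x, f x = f (swp i l x)) ->
  forall x, f (setc x i false) = f (setc x i true).
Proof.
move=> ij il jl K1 K0 Sij Sil x.
pose P a c d := [ffun k => if k == i then a else if k == j then c else if k == l then d else x k] : point n.
have E1 : forall a c d e g, setc (setc (P a c d) j e) i g = P g e d.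
  move=> a c d e g; kcases i j l.
have E2 : forall a c d e g, setc (setc (P a c d) l e) i g = P g c e.
  move=> a c d e g; kcases i j l.
have E3 : forall a c d, swp i j (P a c d) = P c a d.
  move=> a c d; rewrite /swp; kcases i j l.
have E4 : forall a c d, swp i l (P a c d) = P d c a.
  move=> a c d; rewrite /swp; kcases i j l.
have E5 : forall a, setc x i a = P a (x j) (x l).
  move=> a; kcases i j l.
have k1 : forall d, f (P true false d) = f (P true true d).
  by move=> d; have := K1 (P true true d); rewrite !E1.
have k0 : forall c, f (P false c false) = f (P false c true).
  by move=> c; have := K0 (P true c true); rewrite !E2.
have sij : forall a c d, f (P a c d) = f (P c a d).
  by move=> a c d; rewrite (Sij (P a c d)) E3.
have sil : forall a c d, f (P a c d) = f (P d c a).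
  by move=> a c d; rewrite (Sil (P a c d)) E4.
have c0 : forall a, f (P true a false) = f (P false a false).
  by move=> a; rewrite sil k0.
have c01 : f (P true false true) = f (P false false false).
  by rewrite (sij true false true) -k0 (sij false true false) c0.
rewrite !E5; case: (x j); case: (x l).
- by rewrite -k0 -k1 c01 (sij false true false) c0.
- by rewrite c0.
- by rewrite -k0 c01.
- by rewrite c0.
Qed.
End Kill.

Section Choose.
Variables (n : nat) (f : point n -> bool).
Hypothesis fp : positive f.

Lemma swp_inv (i j : 'I_n) (x : point n) : i != j -> swp i j (swp i j x) = x.
Proof. move=> ij; rewrite /swp; kcases i j j. Qed.

Lemma swp_same (i j : 'I_n) (x : point n) : x i = x j -> swp i j x = x.
Proof. move=> E; rewrite /swp; kcases i j j; by rewrite E. Qed.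

Definition cnt (k : 'I_n) := #|[set x : point n | f x && x k]|.

Lemma swap_card (i j : 'I_n) : i != j ->
  (forall x, f x -> x j -> ~~ x i -> f (swp i j x)) ->
  cnt j <= cnt i /\ (cnt i <= cnt j -> forall x, f x = f (swp i j x)).
Proof.
move=> ij H.
have inj : injective (swp i j) := can_inj (fun x : point n => @swp_inv i j x ij).
have sub : swp i j @: [set x | f x && x j] \subset [set x | f x && x i].
  apply/subsetP => y /imsetP [x]; rewrite inE => /andP [fx xj] ->.
  rewrite inE {2}/swp ffunE eqxx xj andbT.
  case xi: (x i); first by rewrite swp_same ?xi.
  by apply: H => //; rewrite xi.
have c1 : cnt j <= cnt i by rewrite /cnt -(card_imset _ inj); exact: subset_leq_card.
split=> // cij.
have /eqP E : swp i j @: [set x | f x && x j] == [set x | f x && x i].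
  by rewrite eqEcard sub card_imset.
have le : forall x, f x -> f (swp i j x).
  move=> x fx; case xi: (x i); case xj: (x j).
  - by rewrite swp_same ?xi ?xj.
  - have : x \in [set x | f x && x i] by rewrite inE fx xi.
    rewrite -E => /imsetP [y]; rewrite inE => /andP [fy _] ->.
    by rewrite swp_inv.
  - by apply: H => //; rewrite ?xj ?xi.
  - by rewrite swp_same ?xi ?xj.
move=> x; apply/idP/idP; first exact: le.
by move/le; rewrite swp_inv.
Qed.

Lemma kill1_H (i j : 'I_n) : i != j ->
  (forall y, f (setc (setc y j false) i true) = f (setc (setc y j true) i true)) ->
  forall x, f x -> x j -> ~~ x i -> f (swp i j x).
Proof.
move=> ij K x fx xj xi.
have -> : swp i j x = setc (setc x j false) i true.
  rewrite /swp; kcases i j j; by rewrite ?xj ?(negbTE xi).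
rewrite K; apply: fp fx _; apply/preceqP => k; rewrite !setcE.
by case: eqP => //; case: eqP.
Qed.

Lemma kill0_H (i j : 'I_n) : i != j ->
  (forall y, f (setc (setc y j false) i false) = f (setc (setc y j true) i false)) ->
  forall x, f x -> x j -> ~~ x i -> f (swp i j x).
Proof.
move=> ij K x fx xj xi.
have -> : swp i j x = setc (setc x j false) i true.
  rewrite /swp; kcases i j j; by rewrite ?xj ?(negbTE xi).
have ex : x = setc (setc x j true) i false.
  rewrite /swp; kcases i j j; by rewrite ?xj ?(negbTE xi).
move: fx; rewrite ex -K => fx; apply: fp fx _; apply/preceqP => k; rewrite !setcE.
by case: eqP => //; case: eqP.
Qed.

Lemma kill_both (i j : 'I_n) : i != j ->
  (forall y, f (setc (setc y j false) i true) = f (setc (setc y j true) i true)) ->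
  (forall y, f (setc (setc y j false) i false) = f (setc (setc y j true) i false)) ->
  ~ relevant f j.
Proof.
move=> ij K1 K0 [x]; rewrite /restrict; apply.
have e : forall c, setc x j c = setc (setc x j c) i (x i).
  by move=> c; rewrite [RHS]setc_eq // setcE (negbTE ij).
rewrite (e false) (e true); case: (x i); [exact: K1 | exact: K0].
Qed.

Lemma not_rel (g : point n -> bool) j : ~ relevant g j ->
  forall y, g (setc y j false) = g (setc y j true).
Proof. by move=> Hn y; case: (g (setc y j false) =P g (setc y j true)) => // ne; exfalso; apply: Hn; exists y. Qed.

Lemma choose_ib (S : {set 'I_n}) : S != set0 -> (forall j, j \in S -> relevant f j) ->
  exists i, i \in S /\ exists b, forall j, j \in S -> j != i -> relevant (restrict f i b) j.
Proof.
case/set0Pn => i0 i0S Hrel.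
pose P := [pred k | k \in S].
have Pi0 : P i0 by [].
case: (arg_minnP cnt Pi0) => i iS Hmin.
exists i; split => //.
case: (classic (exists j, j \in S /\ j != i /\ ~ relevant (restrict f i true) j)); last first.
  move=> Hn; exists true => j jS ji; apply: NNPP => nr; apply: Hn; by exists j.
move=> [j [jS [ji nrj]]].
case: (classic (exists l, l \in S /\ l != i /\ ~ relevant (restrict f i false) l)); last first.
  move=> Hn; exists false => l lS li; apply: NNPP => nr; apply: Hn; by exists l.
move=> [l [lS [li nrl]]]; exfalso.
have K1 := not_rel nrj; have K0 := not_rel nrl.
rewrite /restrict in K1 K0.
have ij : i != j by rewrite eq_sym.
have il : i != l by rewrite eq_sym.
have jl : j != l.
  apply/eqP => ejl; subst l; exact: (kill_both ij K1 K0 (Hrel j jS)).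
have [_ Sij] := swap_card ij (kill1_H ij K1).
have [_ Sil] := swap_card il (kill0_H il K0).
have Sij' := Sij (Hmin j jS); have Sil' := Sil (Hmin l lS).
have := final_contra ij il jl K1 K0 Sij' Sil'.
case: (Hrel i iS) => x; rewrite /restrict => ne /(_ x); exact: ne.
Qed.

End Choose.

Theorem mainTheorem2 (n : nat) (f : point n -> bool) (S : {set 'I_n}) (k : nat) :
  positive f ->
  S != set0 ->
  #|S| = k ->
  (forall i, i \in S -> relevant f i) ->
  k.+1 <= #|[set y : point n | extremal f y && corresponds_set f y S]|.
Proof.
move=> fp S0 cS rel.
elim: k f fp S S0 cS rel => [|k IH] f fp S S0 cS rel.
  by move: S0; rewrite -cards_eq0 cS.
have [i [iS [b Hb]]] := choose_ib fp S0 rel.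
case: k IH cS => [|k] IH cS.
  have [z [mz zi]] := rel_max_zero fp (rel i iS).
  have [y [my yi]] := rel_min_one fp (rel i iS).
  have zE : z \in Ex f S.
    rewrite inE /extremal mz /=; apply/existsP; exists i.
    by rewrite iS /corresponds_var mz zi.
  have yE : y \in Ex f S.
    rewrite inE /extremal my orbT /=; apply/existsP; exists i.
    by rewrite iS /corresponds_var my yi orbT.
  have zy : z != y.
    by apply/eqP => e; move: mz; rewrite e => /andP [/negP nf _]; apply: nf; case/andP: my.
  apply: (@leq_trans #|[set z; y]|); first by rewrite cards2 zy.
  apply: subset_leq_card; apply/subsetP => x; rewrite !inE => /orP [] /eqP ->.
  - by move: zE; rewrite inE.
  - by move: yE; rewrite inE.
have cS' : #|S :\ i| = k.+1.
  by move: cS; rewrite (cardsD1 i S) iS add1n => -[].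
have S0' : S :\ i != set0 by rewrite -cards_eq0 cS'.
have rel' : forall j, j \in S :\ i -> relevant (restrict f i b) j.
  by move=> j; rewrite !inE => /andP [ji jS]; apply: Hb.
have := IH _ (restrict_pos (i:=i) (b:=b) fp) _ S0' cS' rel'.
move=> H; apply: leq_ltn_trans H _.
exact: (step_card b fp iS (rel i iS)).
Qed.
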